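(* Let $L$ be a finite lattice and $\varphi\in R(L)$ with $\varphi(\hat0)\ge 0$. Then the Möbius inverse $f$ of $\varphi$ is nonnegative on $L$ if and only if $\varphi$ is completely monotone.
   Context: $L$ is a finite lattice with order $\le$, meet $\wedge$, minimum $\hat0$; $R(L)$ is the space of real-valued functions on $L$. The Möbius inverse of $\varphi$ is the unique $f\in R(L)$ with $\varphi(x)=\sum_{y\le x}f(y)$ for all $x\in L$. For $a\in L$, $\nabla_a\varphi(x)=\varphi(x)-\varphi(x\wedge a)$, and $\nabla_{a_1,\ldots,a_n}\varphi=\nabla_{a_n}(\nabla_{a_1,\ldots,a_{n-1}}\varphi)$ for $n\ge2$. The function $\varphi$ is completely monotone if $\nabla_{a_1,\ldots,a_n}\varphi(x)\ge0$ for all $x,a_1,\dots,a_n\in L$ and all $n\ge1$. *)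

(* Defs.v *)
From HB Require Import structures.
From mathcomp Require Import all_boot all_order all_algebra.
From mathcomp Require Import Rstruct.
Set Implicit Arguments. Unset Strict Implicit. Unset Printing Implicit Defensive.
Import Order.TTheory GRing.Theory Num.Theory.
Local Open Scope order_scope.
Local Open Scope ring_scope.

Notation RR := Rdefinitions.R.

(* A finite lattice L is a finTBLatticeType (finite, nonempty, so it has
   \bot = \hat0 and \top).  Functions in R(L) are L -> RR. *)

Section Defs.
Context {disp : Order.disp_t} {L : finTBLatticeType disp}.

Definition mobius_inverse (phi f : L -> RR) : Prop :=
  forall x : L, phi x = \sum_(y : L | (y <= x)%O) f y.

Definition nabla (a : L) (phi : L -> RR) : L -> RR :=
  fun x => phi x - phi (x `&` a)%O.

Definition nablas (s : seq L) (phi : L -> RR) : L -> RR :=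
  foldl (fun psi a => nabla a psi) phi s.

Definition completely_monotone (phi : L -> RR) : Prop :=
  forall (s : seq L) (x : L), (0 < size s)%N -> 0 <= nablas s phi x.
End Defs.

(* Main.v *)
Require Import Defs.
From HB Require Import structures.
From mathcomp Require Import all_boot all_order all_algebra.
From mathcomp Require Import Rstruct.
Import Order.TTheory GRing.Theory Num.Theory.
Local Open Scope ring_scope.

Lemma nablas_sum (disp : Order.disp_t) (L : finTBLatticeType disp)
  (phi f : L -> RR) : mobius_inverse phi f ->
  forall s x, nablas s phi x =
    \sum_(y : L | (y <= x)%O && all (fun a => ~~ (y <= a)%O) s) f y.
Proof.
move=> Hm s; elim/last_ind: s => [|s a IH] x.
  by rewrite /nablas /= Hm; apply: eq_bigl => y; rewrite andbT.
rewrite /nablas foldl_rcons -/(nablas s phi) /nabla !IH.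
rewrite (bigID (fun y => (y <= a)%O)) /=.
have -> : \sum_(i | ((i <= x)%O && all (fun a0 : L => ~~ (i <= a0)%O) s) && (i <= a)%O) f i
  = \sum_(y | (y <= (x `&` a))%O && all (fun a0 : L => ~~ (y <= a0)%O) s) f y.
  by apply: eq_bigl => y; rewrite lexI; case: (y <= x)%O; case: (y <= a)%O;
     rewrite ?andbT ?andbF.
rewrite addrC addrK; apply: eq_bigl => y.
by rewrite all_rcons; case: (y <= x)%O; case: (y <= a)%O => //=; rewrite ?andbF ?andbT.
Qed.

Theorem corollary2p5 (disp : Order.disp_t) (L : finTBLatticeType disp)
  (phi f : L -> RR) :
  0 <= phi (\bot%O) ->
  mobius_inverse phi f ->
  ((forall x : L, 0 <= f x) <-> completely_monotone phi).
Proof.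
move=> H0 Hm; split.
  move=> Hf s x _; rewrite (@nablas_sum _ _ _ _ Hm); exact: sumr_ge0.
move=> Hcm x.
pose s := [seq a <- enum L | ~~ (x <= a)%O].
have E : nablas s phi x = f x.
  rewrite (@nablas_sum _ _ _ _ Hm); apply: big_pred1 => y /=.
  apply/idP/eqP.
    case/andP => yx /allP Hall; apply/eqP; rewrite eq_le yx /=.
    apply/negPn/negP => nxy.
    have : y \in s by rewrite mem_filter nxy mem_enum.
    by move/Hall; rewrite lexx.
  move=> ->; rewrite lexx /=; apply/allP => a.
  by rewrite mem_filter => /andP [].
have Hsb : forall a, (a \in s) = ~~ (x <= a)%O.
  by move=> a; rewrite mem_filter mem_enum andbT.
clearbody s.
rewrite -E.
case: (posnP (size s)) => [/eqP|]; last by move=> Hs; apply: Hcm.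
rewrite size_eq0 => /eqP Hs; rewrite Hs.
have -> : x = \bot%O.
  apply/eqP; rewrite eq_le le0x andbT.
  apply/negPn/negP => nx.
  have : (\bot%O : L) \in s by rewrite Hsb.
  by rewrite Hs.
exact: H0.
Qed.
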